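(* Let $m,d\ge1$ be integers, let $\preceq$ be the dominance order on $[m]^d$, and for $x\in[0,m-1]^d$ let $V(x)=\prod_{i=1}^d(x_i+1)$. For $u\preceq w$ set $\hat y_{uw}=1/V(w-u)$, and for $u\preceq v\preceq w$ set $$\hat y'_{uvw}=\hat y_{uw}\frac{V(v-u)}{V(v-u)+V(w-v)},\qquad \hat y''_{uvw}=\hat y_{uw}\frac{V(w-v)}{V(v-u)+V(w-v)}.$$ Then for all $u,v\in[m]^d$ with $u\preceq v$, $$\sum_{w\in[m]^d:\ v\preceq w}\hat y'_{uvw}+\sum_{w\in[m]^d:\ w\preceq u}\hat y''_{wuv}\le (4\pi)^d.$$
   Context: The dominance order: $x\preceq y$ iff $x_i\le y_i$ for all $i\in[d]$. *)

(* Defs.v *)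
From HB Require Import structures.
From mathcomp Require Import all_boot all_order all_algebra.
From mathcomp Require Import reals trigo.
Set Implicit Arguments. Unset Strict Implicit. Unset Printing Implicit Defensive.
Import Order.TTheory GRing.Theory Num.Theory.
Local Open Scope ring_scope.

(* Points of [m]^d, with [m] represented by 'I_m = {0,...,m-1}
   (a shift of {1,...,m}; only coordinate differences matter). *)
Definition pt (m d : nat) := {ffun 'I_d -> 'I_m}.

Definition dom (m d : nat) (x y : pt m d) : bool := [forall i, (x i <= y i)%N].

Definition Vol (R : realType) (m d : nat) (u w : pt m d) : R :=
  \prod_(i < d) ((w i - u i)%N.+1)%:R.

Definition yhat (R : realType) (m d : nat) (u w : pt m d) : R := 1 / Vol R u w.

Definition y1 (R : realType) (m d : nat) (u v w : pt m d) : R :=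
  yhat R u w * (Vol R u v / (Vol R u v + Vol R v w)).

Definition y2 (R : realType) (m d : nat) (u v w : pt m d) : R :=
  yhat R u w * (Vol R v w / (Vol R u v + Vol R v w)).

(* Main.v *)
Require Import Defs.
From HB Require Import structures.
From mathcomp Require Import all_boot all_order all_algebra.
From mathcomp Require Import reals trigo.
From mathcomp Require Import ring lra zify.
Import Order.TTheory GRing.Theory Num.Theory.
Local Open Scope ring_scope.

Section OneD.
Variable R : realType.
Definition sq (n : nat) : R := Num.sqrt (n%:R).
Definition phi (a b : nat) : R := sq a.+1 / (sq b.+1 * ((a + b).+1)%:R).

Lemma sq_ge0 n : 0 <= sq n. Proof. exact: sqrtr_ge0. Qed.
Lemma sq_gt0 n : (0 < n)%N -> 0 < sq n.
Proof. by move=> h; rewrite /sq sqrtr_gt0 ltr0n. Qed.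
Lemma sq_sqr n : sq n ^+ 2 = n%:R.
Proof. by rewrite /sq sqr_sqrtr // ler0n. Qed.

Lemma key k : 1 <= 2 * sq k.+1 * (sq k.+1 - sq k).
Proof.
have h1 := sq_sqr k.+1; have h2 := sq_sqr k.
have h3 := sq_ge0 k.+1; have h4 := sq_ge0 k.
rewrite -natr1 in h1.
nra.
Qed.
End OneD.

Section OneD.
Variable R : realType.
Notation sq := (sq R).
Notation phi := (phi R).

Lemma L1 a N : (N <= a.+1)%N -> \sum_(b < N) phi a b <= 2 * sq N / sq a.+1.
Proof.
have r0 : 0 < sq a.+1 by apply: sq_gt0.
elim: N => [|N IH] hN.
  by rewrite big_ord0 /sq mulr0n sqrtr0 mulr0 mul0r.
rewrite big_ord_recr /=.
have {}IH := IH (ltnW hN).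
set c : R := ((a + N).+1)%:R.
have s0 : 0 < sq N.+1 by apply: sq_gt0.
have hk := key R N.
have hr := sq_sqr R a.+1.
have hc : sq a.+1 ^+ 2 <= c by rewrite hr /c ler_nat ltnS leq_addr.
have c0 : 0 < c by rewrite /c ltr0n.
suff : phi a N <= 2 * sq N.+1 / sq a.+1 - 2 * sq N / sq a.+1 by lra.
rewrite -subr_ge0.
have -> : 2 * sq N.+1 / sq a.+1 - 2 * sq N / sq a.+1 - phi a N
   = ((2 * sq N.+1 - 2 * sq N) * sq N.+1 * c - sq a.+1 ^+ 2) / (sq a.+1 * sq N.+1 * c).
  rewrite /phi -/c; field; apply/and3P; split; apply: lt0r_neq0 => //;
    have := ler0n R a; have := ler0n R N; lra.
apply: divr_ge0; last by apply: mulr_ge0; [apply: mulr_ge0|]; apply: ltW.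
have h4 := sq_ge0 R N.
nra.
Qed.

Lemma L2 a k : \sum_(b < a.+1 + k) phi a b <= 4 - 2 * sq a.+1 / sq (a.+1 + k).
Proof.
have r0 : 0 < sq a.+1 by apply: sq_gt0.
elim: k => [|k IH].
  rewrite addn0; apply: le_trans (@L1 a a.+1 (leqnn _)) _.
  rewrite -mulrA divff ?lt0r_neq0 //; lra.
rewrite addnS big_ord_recr /=.
set N := (a.+1 + k)%N in IH *.
set c : R := ((a + N).+1)%:R.
have s0 : 0 < sq N.+1 by apply: sq_gt0.
have t0 : 0 < sq N by apply: sq_gt0; rewrite /N addSn.
have hk := key R N.
have hs := sq_sqr R N.+1.
have hc : sq N.+1 ^+ 2 <= c by rewrite hs /c ler_nat ltnS leq_addl.
have c0 : 0 < c by rewrite /c ltr0n.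
have st : sq N <= sq N.+1 by rewrite /sq ler_sqrt ?ler_nat // ler0n.
suff : phi a N <= 2 * sq a.+1 / sq N - 2 * sq a.+1 / sq N.+1 by lra.
rewrite -subr_ge0.
have -> : 2 * sq a.+1 / sq N - 2 * sq a.+1 / sq N.+1 - phi a N
   = (sq a.+1 * (2 * c * (sq N.+1 - sq N) - sq N)) / (sq N * sq N.+1 * c).
  rewrite /phi -/c; field; apply/and3P; split; apply: lt0r_neq0 => //;
    have := ler0n R a; have := ler0n R N; lra.
apply: divr_ge0; last by apply: mulr_ge0; [apply: mulr_ge0|]; apply: ltW.
apply: mulr_ge0; first exact: ltW.
have e1 : 2 * sq N.+1 ^+ 2 * (sq N.+1 - sq N) <= 2 * c * (sq N.+1 - sq N) by nra.
have e2 : sq N.+1 <= 2 * sq N.+1 ^+ 2 * (sq N.+1 - sq N) by nra.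
lra.
Qed.

Lemma L3 a N : \sum_(b < N) phi a b <= 4.
Proof.
case: (leqP N a.+1) => h.
  apply: le_trans (@L1 a N h) _.
  have r0 : 0 < sq a.+1 by apply: sq_gt0.
  have : sq N <= sq a.+1 by rewrite /sq ler_sqrt ?ler_nat // ler0n.
  have := sq_ge0 R N.
  rewrite ler_pdivrMr //; lra.
have -> : N = (a.+1 + (N - a.+1))%N by rewrite subnKC // ltnW.
apply: le_trans (L2 _ _) _.
have : 0 <= 2 * sq a.+1 / sq (a.+1 + (N - a.+1)).
  by apply: divr_ge0; [apply: mulr_ge0 => //; apply: sq_ge0 | apply: sq_ge0].
lra.
Qed.
End OneD.

Section Main.
Variable R : realType.
Notation sq := (sq R).
Notation phi := (phi R).

Lemma phi_ge0 a b : 0 <= phi a b.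
Proof. rewrite /phi; apply: divr_ge0; [exact: sq_ge0|apply: mulr_ge0 => //; exact: sq_ge0]. Qed.

Lemma shiftsum a c k n :
  \sum_(j < n) (if (c <= j)%N then phi a (j - c + k) else 0) + \sum_(b < k) phi a b
  = \sum_(b < (n - c) + k) phi a b.
Proof.
elim: n => [|n IH]; first by rewrite big_ord0 add0r sub0n add0n.
rewrite big_ord_recr /=.
case: (leqP c n) => h.
  rewrite -addrA [phi _ _ + _]addrC addrA IH.
  have -> : (n.+1 - c + k = (n - c + k).+1)%N by lia.
  by rewrite big_ord_recr.
by rewrite addr0 IH; have -> : (n.+1 - c = n - c)%N by lia.
Qed.

Lemma fwd1 a c k n :
  \sum_(j < n) (if (c <= j)%N then phi a (j - c + k) else 0) <= 4.
Proof.
have := shiftsum a c k n; have := L3 R a (n - c + k).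
have : 0 <= \sum_(b < k) phi a b by apply: sumr_ge0 => *; apply: phi_ge0.
lra.
Qed.

Lemma bwd1 a c n :
  \sum_(j < n) (if (j <= c)%N then phi a (c - j) else 0) <= 4.
Proof.
rewrite (reindex_inj rev_ord_inj) /=.
apply: le_trans (fwd1 a (n.-1 - c) (c - n.-1) n).
apply: ler_sum => j _.
have hj := ltn_ord j.
have -> : (n - j.+1 <= c)%N = (n.-1 - c <= j)%N by apply/idP/idP; lia.
case: ifP => // h.
have -> : (c - (n - j.+1) = j - (n.-1 - c) + (c - n.-1))%N by lia.
by [].
Qed.

Lemma ineqG (x y z : R) : 0 < x -> 0 < y -> 0 < z ->
  1 / z * (x ^+ 2 / (x ^+ 2 + y ^+ 2)) <= 1 / 2 * (x / (y * z)).
Proof.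
move=> x0 y0 z0.
have q0 : 0 < x ^+ 2 + y ^+ 2 by nra.
rewrite -subr_ge0.
have -> : 1 / 2 * (x / (y * z)) - 1 / z * (x ^+ 2 / (x ^+ 2 + y ^+ 2))
  = x * (x - y) ^+ 2 / (2 * y * z * (x ^+ 2 + y ^+ 2)).
  field; rewrite !lt0r_neq0 //.
apply: divr_ge0; first by apply: mulr_ge0; [exact: ltW | exact: sqr_ge0].
apply: ltW; apply: mulr_gt0 => //; apply: mulr_gt0 => //; apply: mulr_gt0 => //.
Qed.

Lemma prodG d (al be : 'I_d -> nat) :
  1 / (\prod_i ((al i + be i).+1)%:R) *
  (\prod_i ((al i).+1)%:R / (\prod_i ((al i).+1)%:R + \prod_i ((be i).+1)%:R))
  <= 1 / 2 * \prod_i phi (al i) (be i) :> R.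
Proof.
have hA : \prod_i ((al i).+1)%:R = (\prod_i sq (al i).+1) ^+ 2 :> R.
  by rewrite -prodrXl; apply: eq_bigr => i _; rewrite sq_sqr.
have hB : \prod_i ((be i).+1)%:R = (\prod_i sq (be i).+1) ^+ 2 :> R.
  by rewrite -prodrXl; apply: eq_bigr => i _; rewrite sq_sqr.
have hP : \prod_i phi (al i) (be i) =
   (\prod_i sq (al i).+1) / ((\prod_i sq (be i).+1) * \prod_i ((al i + be i).+1)%:R).
  by rewrite /phi prodf_div big_split.
rewrite hA hB hP; apply: ineqG.
- by apply: prodr_gt0 => i _; apply: sq_gt0.
- by apply: prodr_gt0 => i _; apply: sq_gt0.
- by apply: prodr_gt0 => i _; rewrite ltr0n.
Qed.

Lemma term1 m d (u v w : pt m d) : dom u v -> dom v w ->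
  y1 R u v w <= 1 / 2 * \prod_i phi (v i - u i) (w i - v i).
Proof.
move=> /forallP huv /forallP hvw; rewrite /y1 /yhat /Vol.
have -> : \prod_i ((w i - u i).+1)%:R = \prod_i (((v i - u i) + (w i - v i)).+1)%:R :> R.
  apply: eq_bigr => i _; congr (_.+1%:R); have := huv i; have := hvw i; lia.
exact: prodG.
Qed.

Lemma term2 m d (u v w : pt m d) : dom w u -> dom u v ->
  y2 R w u v <= 1 / 2 * \prod_i phi (v i - u i) (u i - w i).
Proof.
move=> /forallP hwu /forallP huv; rewrite /y2 /yhat /Vol.
have -> : \prod_i ((v i - w i).+1)%:R = \prod_i (((v i - u i) + (u i - w i)).+1)%:R :> R.
  apply: eq_bigr => i _; congr (_.+1%:R); have := huv i; have := hwu i; lia.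
rewrite [X in _ * (_ / X)]addrC.
exact: prodG.
Qed.

Lemma sum_prod m d (F : 'I_d -> 'I_m -> R) :
  (forall i j, 0 <= F i j) -> (forall i, \sum_j F i j <= 4) ->
  \sum_(w : pt m d) \prod_i F i (w i) <= 4 ^+ d.
Proof.
move=> F0 F4.
rewrite /pt -bigA_distr_bigA.
apply: (@le_trans _ _ (\prod_(i < d) (4:R))).
  by apply: ler_prod => i _; rewrite F4 andbT; apply: sumr_ge0 => *.
by rewrite prodr_const card_ord.
Qed.

End Main.

Theorem lemma3 (R : realType) (m d : nat) (hm : (1 <= m)%N) (hd : (1 <= d)%N)
  (u v : pt m d) (huv : dom u v) :
  \sum_(w : pt m d | dom v w) y1 R u v w
  + \sum_(w : pt m d | dom w u) y2 R w u v
  <= (4 * pi) ^+ d.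
Proof.
have S1 : \sum_(w : pt m d | dom v w) y1 R u v w <= 1 / 2 * 4 ^+ d.
  apply: (@le_trans _ _ (\sum_(w : pt m d | dom v w)
        1 / 2 * \prod_i phi R (v i - u i) (w i - v i))).
    by apply: ler_sum => w hw; apply: term1.
  rewrite -mulr_sumr; apply: ler_wpM2l; first lra.
  pose F1 := fun (i : 'I_d) (j : 'I_m) => if (v i <= j)%N then phi R (v i - u i) (j - v i + 0) else 0.
  have -> : \sum_(w : pt m d | dom v w) \prod_i phi R (v i - u i) (w i - v i)
    = \sum_(w : pt m d) \prod_i F1 i (w i).
    rewrite big_mkcond; apply: eq_bigr => w _ /=; rewrite /F1.
    case: ifP => [/forallP h | /negbT].
      by apply: eq_bigr => i _; rewrite h addn0.
    rewrite negb_forall => /existsP [i hi].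
    by rewrite (bigD1 i) //= (negbTE hi) mul0r.
  apply: (@sum_prod R m d F1) => i; rewrite /F1; first by move=> j; case: ifP => // _; apply: phi_ge0.
  exact: fwd1.
have S2 : \sum_(w : pt m d | dom w u) y2 R w u v <= 1 / 2 * 4 ^+ d.
  apply: (@le_trans _ _ (\sum_(w : pt m d | dom w u)
        1 / 2 * \prod_i phi R (v i - u i) (u i - w i))).
    by apply: ler_sum => w hw; apply: term2.
  rewrite -mulr_sumr; apply: ler_wpM2l; first lra.
  pose F2 := fun (i : 'I_d) (j : 'I_m) => if (j <= u i)%N then phi R (v i - u i) (u i - j) else 0.
  have -> : \sum_(w : pt m d | dom w u) \prod_i phi R (v i - u i) (u i - w i)
    = \sum_(w : pt m d) \prod_i F2 i (w i).
    rewrite big_mkcond; apply: eq_bigr => w _ /=; rewrite /F2.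
    case: ifP => [/forallP h | /negbT].
      by apply: eq_bigr => i _; rewrite h.
    rewrite negb_forall => /existsP [i hi].
    by rewrite (bigD1 i) //= (negbTE hi) mul0r.
  apply: (@sum_prod R m d F2) => i; rewrite /F2; first by move=> j; case: ifP => // _; apply: phi_ge0.
  exact: bwd1.
have hp : 1 <= pi ^+ d :> R.
  by apply: exprn_ege1; have := pi_ge2 R; lra.
have h4 : 0 <= 4 ^+ d :> R by apply: exprn_ge0.
rewrite exprMn.
have : 4 ^+ d <= 4 ^+ d * pi ^+ d :> R by nra.
lra.
Qed.
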